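(* Let $X=(x_1,\ldots,x_n)$ and $Y=(y_1,\ldots,y_n)$ be two sequences of real numbers and let $p\in\{1,\dots,n\}$. Then for all $S\subseteq \{1,\dots,n\}$, $$|\mathrm{top}_p(X)-\mathrm{top}_p(Y)| \leq p\max_{i\in S} |x_i-y_i|+\sum_{i\in \{1,\dots,n\}\setminus S} |x_i-y_i|,$$ where $\mathrm{top}_p(Z)$ denotes the sum of the $p$ largest numbers in the sequence $Z$ (counted with multiplicity).
   Context: The maximum over an empty index set is interpreted as $0$. *)

(* Defs.v *)
From mathcomp Require Import all_boot all_order all_algebra.
Set Implicit Arguments. Unset Strict Implicit. Unset Printing Implicit Defensive.
Import Order.TTheory GRing.Theory Num.Theory.
Local Open Scope ring_scope.

Definition top (R : realDomainType) (n p : nat) (Z : 'I_n -> R) : R :=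
  \sum_(z <- take p (sort (fun a b : R => b <= a) [seq Z i | i <- enum 'I_n])) z.

(* maximum over an index set; the maximum over the empty set is 0 *)
Definition maxS (R : realDomainType) (n : nat) (S : {set 'I_n}) (f : 'I_n -> R) : R :=
  \big[Num.max/0]_(i in S) f i.

(* Main.v *)
Require Import Defs.
From mathcomp Require Import all_boot all_order all_algebra.
From mathcomp Require Import ring lra zify.
Import Order.TTheory GRing.Theory Num.Theory.
Local Open Scope ring_scope.

Section Aux.
Variables (R : realFieldType) (n : nat).
Implicit Types (X Y : 'I_n -> R).

Definition srt X := sort (fun i j : 'I_n => X j <= X i) (enum 'I_n).

Lemma topE X p : top p X = \sum_(i <- take p (srt X)) X i.
Proof. by rewrite /top sort_map -map_take big_map. Qed.

Lemma srt_uniq X : uniq (srt X).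
Proof. by rewrite sort_uniq enum_uniq. Qed.

Lemma srt_size X : size (srt X) = n.
Proof. by rewrite size_sort size_enum_ord. Qed.

Lemma topS X p : (p <= n)%N ->
  top p X = \sum_(i in [set i in take p (srt X)]) X i /\
  #|[set i in take p (srt X)]| = p.
Proof.
move=> hp; split.
  rewrite topE big_uniq; last by apply: take_uniq; exact: srt_uniq.
  by apply: eq_bigl => i; rewrite inE.
rewrite cardsE; move/card_uniqP: (take_uniq p (srt_uniq X)) => ->.
by rewrite size_takel // srt_size.
Qed.


Lemma srt_rel X p a b : a \in take p (srt X) -> b \in drop p (srt X) -> X b <= X a.
Proof.
have tr : transitive (fun i j : 'I_n => X j <= X i).
  by move=> x y z h1 h2; exact: le_trans h2 h1.
have tot : total (fun i j : 'I_n => X j <= X i).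
  by move=> x y; exact: le_total.
have := sort_sorted tot (enum 'I_n); rewrite (sorted_pairwise tr) -/(srt X).
move: (srt X) => s.
rewrite -{1}(cat_take_drop p s) pairwise_cat => /and3P[/allrelP h _ _].
by move=> ha hb; exact: h.
Qed.

Lemma sum_le_swap X (B A : {set 'I_n}) : #|B| = #|A| ->
  (forall a b, a \in A -> b \in B -> X b <= X a) ->
  \sum_(b in B) X b <= \sum_(a in A) X a.
Proof.
move=> hc h.
case: (posnP #|A|) => hk.
  move: (hk); rewrite -hc => /eqP; rewrite cards_eq0 => /eqP ->.
  move/eqP: hk; rewrite cards_eq0 => /eqP ->.
  by rewrite !big_set0.
have hk0 : (0 : R) < #|A|%:R by rewrite ltr0n.
rewrite -(ler_pM2l hk0).
have e1 : #|A|%:R * \sum_(b in B) X b = \sum_(b in B) \sum_(a in A) X b.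
  by rewrite mulr_sumr; apply: eq_bigr => b _; rewrite sumr_const mulr_natl.
have e2 : #|A|%:R * \sum_(a in A) X a = \sum_(b in B) \sum_(a in A) X a.
  by rewrite exchange_big /= mulr_sumr; apply: eq_bigr => a _; rewrite sumr_const mulr_natl hc.
rewrite e1 e2; apply: ler_sum => b hb; apply: ler_sum => a ha; exact: h.
Qed.

Lemma top_ge X p (T : {set 'I_n}) : (p <= n)%N -> #|T| = p ->
  \sum_(i in T) X i <= top p X.
Proof.
move=> hp hT; have [-> hA] := topS X p hp.
set A := [set i in take p (srt X)] in hA *.
rewrite (big_setID (A:=T) A) (big_setID (A:=A) T) setIC /= lerD2l.
apply: sum_le_swap.
  have h1 := cardsID A T; have h2 := cardsID T A.
  rewrite setIC in h2.
  by apply/eqP; rewrite -(eqn_add2l #|T :&: A|) h1 h2 hA hT.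
move=> a b; rewrite !inE => /andP[_ ha] /andP[hb _].
apply: (srt_rel X p) => //.
have : b \in srt X by rewrite mem_sort mem_enum.
by rewrite -{1}(cat_take_drop p (srt X)) mem_cat (negbTE hb).
Qed.

Lemma maxS_ge0 (S : {set 'I_n}) (f : 'I_n -> R) : (forall i, 0 <= f i) -> 0 <= maxS S f.
Proof.
move=> hf; rewrite /maxS; apply: (big_ind (fun x => 0 <= x)) => //.
by move=> x y hx _; rewrite le_max hx.
Qed.

Lemma maxS_ge (S : {set 'I_n}) (f : 'I_n -> R) i : i \in S -> f i <= maxS S f.
Proof. by move=> hi; rewrite /maxS (bigD1 i hi) /= le_max lexx. Qed.

Lemma half X Y p (S : {set 'I_n}) : (p <= n)%N ->
  top p X - top p Y <=
    p%:R * maxS S (fun i => `|X i - Y i|) + \sum_(i in ~: S) `|X i - Y i|.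
Proof.
move=> hp; have [eX hT] := topS X p hp.
set T := [set i in take p (srt X)] in eX hT.
have hY := top_ge Y p T hp hT.
apply: (@le_trans _ _ (\sum_(i in T) `|X i - Y i|)).
  apply: (@le_trans _ _ (\sum_(i in T) (X i - Y i))).
    by rewrite sumrB eX; lra.
  by apply: ler_sum => i _; exact: ler_norm.
rewrite (big_setID (A:=T) S) /=; apply: lerD.
  apply: (@le_trans _ _ (\sum_(i in T :&: S) maxS S (fun i => `|X i - Y i|))).
    by apply: ler_sum => i; rewrite inE => /andP[_ hi]; exact: maxS_ge.
  rewrite sumr_const -(mulr_natl _ #|T :&: S|); apply: ler_wpM2r.
    by apply: maxS_ge0 => i; exact: normr_ge0.
  rewrite ler_nat -hT.
  by apply: subset_leq_card; exact: subsetIl.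
have -> : T :\: S = ~: S :&: T by rewrite setDE setIC.
rewrite [X in _ <= X](big_setID (A:=(~: S)) T) /= lerDl.
by apply: sumr_ge0.
Qed.

End Aux.

Theorem lemma3p2 (R : realFieldType) (n p : nat) (X Y : 'I_n -> R)
  (hp1 : (1 <= p)%N) (hpn : (p <= n)%N) (S : {set 'I_n}) :
  `|top p X - top p Y| <=
    p%:R * maxS S (fun i => `|X i - Y i|) + \sum_(i in ~: S) `|X i - Y i|.
Proof.
rewrite ler_norml; apply/andP; split; last exact: (@half R n X Y p S hpn).
have := @half R n Y X p S hpn.
have e1 : maxS S (fun i => `|Y i - X i|) = maxS S (fun i => `|X i - Y i|).
  by apply: eq_bigr => i _; rewrite distrC.
have e2 : \sum_(i in ~: S) `|Y i - X i| = \sum_(i in ~: S) `|X i - Y i|.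
  by apply: eq_bigr => i _; rewrite distrC.
rewrite e1 e2; lra.
Qed.
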